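(* The Steiner point $X_{99}'$ of the cusp triangle $T'=P_1'P_2'P_3'$ is $$X_{99}'=\left(\frac{a^2-2b^2}{a}\cos u,\;-\frac{2a^2-b^2}{b}\sin u\right).$$
   Context: Let $a>b>0$ and $c>0$ with $c^2=a^2-b^2$. Fix $u\in\mathbb{R}$. Let $\Delta_u(t)=(x_u(t),y_u(t))$, where $x_u(t)=\frac1a\big(c^2(1+\cos(t+u))\cos t-a^2\cos u\big)$ and $y_u(t)=\frac1b\big(c^2\cos t\sin(t+u)-c^2\sin t-a^2\sin u\big)$ (the negative pedal curve of the ellipse $x^2/a^2+y^2/b^2=1$ with respect to its point $(a\cos u,b\sin u)$). For $i=1,2,3$ let $t_i=-u/3-2\pi(i-1)/3$ and $P_i'=\Delta_u(t_i)$. The Steiner circumellipse of a triangle is the ellipse through its vertices centered at its centroid; the Steiner point $X_{99}$ of a triangle is the fourth common point (counted with multiplicity) of its circumcircle and its Steiner circumellipse, besides the three vertices. *)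

(* Defs.v *)
From Stdlib Require Import Reals.
Open Scope R_scope.

Definition pt : Type := (R * R)%type.

(* The negative pedal curve Delta_u(t) of the ellipse x^2/a^2+y^2/b^2=1
   with respect to its point (a cos u, b sin u); c^2 = a^2 - b^2. *)
Definition Delta (a b c u t : R) : pt :=
  ( / a * (c ^ 2 * (1 + cos (t + u)) * cos t - a ^ 2 * cos u),
    / b * (c ^ 2 * cos t * sin (t + u) - c ^ 2 * sin t - a ^ 2 * sin u) ).

Definition tpar (u : R) (i : nat) : R := - u / 3 - 2 * PI * (INR i - 1) / 3.

Definition cusp_vertex (a b c u : R) (i : nat) : pt := Delta a b c u (tpar u i).

Definition centroid (A B C : pt) : pt :=
  ((fst A + fst B + fst C) / 3, (snd A + snd B + snd C) / 3).

Definition circ_pt (O : pt) (r th : R) : pt :=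
  (fst O + r * cos th, snd O + r * sin th).

Definition on_circle (O : pt) (r : R) (P : pt) : Prop :=
  (fst P - fst O) ^ 2 + (snd P - snd O) ^ 2 = r ^ 2.

Definition is_circumcircle (A B C O : pt) (r : R) : Prop :=
  0 < r /\ on_circle O r A /\ on_circle O r B /\ on_circle O r C.

(* Quadratic form centered at G with symmetric matrix [[q11,q12],[q12,q22]];
   the ellipse is { P | qform G q11 q12 q22 P = 1 }. *)
Definition qform (G : pt) (q11 q12 q22 : R) (P : pt) : R :=
  let dx := fst P - fst G in let dy := snd P - snd G in
  q11 * dx ^ 2 + 2 * q12 * dx * dy + q22 * dy ^ 2.

Definition is_steiner_circumellipse (A B C : pt) (q11 q12 q22 : R) : Prop :=
  0 < q11 /\ 0 < q11 * q22 - q12 ^ 2 /\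
  qform (centroid A B C) q11 q12 q22 A = 1 /\
  qform (centroid A B C) q11 q12 q22 B = 1 /\
  qform (centroid A B C) q11 q12 q22 C = 1.

(* X is the Steiner point X_99 of ABC: the fourth common point, counted with
   multiplicity, of the circumcircle and the Steiner circumellipse.
   Intersections with multiplicity are read off the circle parametrization
   th |-> O + r(cos th, sin th): the restriction of the ellipse equation to
   the circle is a trigonometric polynomial of degree 2, which factors as
   K * prod_{i=1..4} sin((th - th_i)/2); the th_i (with repetition) are the
   intersection parameters with multiplicity. *)
Definition is_steiner_point (A B C X : pt) : Prop :=
  exists (O : pt) (r q11 q12 q22 th1 th2 th3 th4 K : R),
    is_circumcircle A B C O r /\
    is_steiner_circumellipse A B C q11 q12 q22 /\
    circ_pt O r th1 = A /\ circ_pt O r th2 = B /\ circ_pt O r th3 = C /\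
    circ_pt O r th4 = X /\
    K <> 0 /\
    (forall th : R,
       qform (centroid A B C) q11 q12 q22 (circ_pt O r th) - 1 =
       K * sin ((th - th1) / 2) * sin ((th - th2) / 2)
         * sin ((th - th3) / 2) * sin ((th - th4) / 2)).

(* Main.v *)
Require Import Defs.
From Stdlib Require Import Reals Lra Psatz Classical.
Open Scope R_scope.

Lemma sc1 x : sin x * sin x + cos x * cos x = 1.
Proof. pose proof (sin2_cos2 x) as H. unfold Rsqr in H. exact H. Qed.

Lemma polar (x y : R) : x ^ 2 + y ^ 2 = 1 -> exists th, cos th = x /\ sin th = y.
Proof.
  intro H.
  assert (Hx : -1 <= x <= 1) by nra.
  assert (Hs : sqrt (1 - x ^ 2) = Rabs y).
  { replace (1 - x ^ 2) with (y * y) by lra. rewrite <- Rsqr_def. apply sqrt_Rsqr_abs. }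
  destruct (Rle_lt_dec 0 y) as [Hy|Hy].
  - exists (acos x). split. apply cos_acos; auto.
    rewrite sin_acos by auto. unfold Rsqr. replace (1 - x * x) with (1 - x^2) by ring.
    rewrite Hs. apply Rabs_right; lra.
  - exists (- acos x). split. rewrite cos_neg. apply cos_acos; auto.
    rewrite sin_neg, sin_acos by auto. unfold Rsqr. replace (1 - x * x) with (1 - x^2) by ring.
    rewrite Hs. rewrite Rabs_left; lra.
Qed.

Definition aff (nx ny c : R) (P : pt) : R := nx * fst P + ny * snd P + c.

Lemma lprop nx ny c mx my e (A B : pt) :
  A <> B -> aff nx ny c A = 0 -> aff nx ny c B = 0 ->
  aff mx my e A = 0 -> aff mx my e B = 0 ->
  (nx <> 0 \/ ny <> 0) -> (mx <> 0 \/ my <> 0) ->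
  exists k, k <> 0 /\ forall P, aff nx ny c P = k * aff mx my e P.
Proof.
  destruct A as [ax ay], B as [bx by_]. unfold aff; simpl.
  intros HAB H1 H2 H3 H4 Hn Hm.
  assert (Hd : bx - ax <> 0 \/ by_ - ay <> 0).
  { destruct (Req_dec (bx - ax) 0); destruct (Req_dec (by_ - ay) 0); auto.
    exfalso; apply HAB; f_equal; lra. }
  assert (E1 : nx * (bx - ax) + ny * (by_ - ay) = 0) by lra.
  assert (E2 : mx * (bx - ax) + my * (by_ - ay) = 0) by lra.
  assert (Hcr : nx * my - ny * mx = 0).
  { destruct Hd as [Hd|Hd].
    - apply (Rmult_eq_reg_r (bx - ax)); [|exact Hd].
      replace ((nx * my - ny * mx) * (bx - ax)) with
        (my * (nx * (bx - ax) + ny * (by_ - ay)) - ny * (mx * (bx - ax) + my * (by_ - ay))) by ring.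
      rewrite E1, E2. ring.
    - apply (Rmult_eq_reg_r (by_ - ay)); [|exact Hd].
      replace ((nx * my - ny * mx) * (by_ - ay)) with
        (nx * (mx * (bx - ax) + my * (by_ - ay)) - mx * (nx * (bx - ax) + ny * (by_ - ay))) by ring.
      rewrite E1, E2. ring. }
  assert (Hm2 : mx * mx + my * my <> 0).
  { destruct Hm as [Hm|Hm]; nra. }
  set (k := (nx * mx + ny * my) / (mx * mx + my * my)).
  assert (Kx : nx = k * mx).
  { assert (H : nx*(mx*mx+my*my) = (nx*mx+ny*my)*mx)
      by (transitivity ((nx*mx+ny*my)*mx + my*(nx*my-ny*mx)); [ring| rewrite Hcr; ring]).
    unfold k. replace ((nx*mx+ny*my)/(mx*mx+my*my)*mx) with ((nx*mx+ny*my)*mx/(mx*mx+my*my))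
      by (field; exact Hm2). rewrite <- H. field; exact Hm2. }
  assert (Ky : ny = k * my).
  { assert (H : ny*(mx*mx+my*my) = (nx*mx+ny*my)*my)
      by (transitivity ((nx*mx+ny*my)*my - mx*(nx*my-ny*mx)); [ring| rewrite Hcr; ring]).
    unfold k. replace ((nx*mx+ny*my)/(mx*mx+my*my)*my) with ((nx*mx+ny*my)*my/(mx*mx+my*my))
      by (field; exact Hm2). rewrite <- H. field; exact Hm2. }
  exists k. split.
  - intro Hk. rewrite Hk in Kx, Ky. destruct Hn; lra.
  - intros [px py]; simpl.
    assert (Hc : c = - (nx * ax + ny * ay)) by lra.
    assert (He : e = - (mx * ax + my * ay)) by lra.
    rewrite Hc, He, Kx, Ky. ring.
Qed.

Lemma chord (O : pt) r ta tb th :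
  aff (cos ((ta+tb)/2)) (sin ((ta+tb)/2))
      (- (fst O * cos ((ta+tb)/2)) - snd O * sin ((ta+tb)/2) - r * cos ((ta-tb)/2))
      (circ_pt O r th)
  = -2 * r * sin ((th - ta)/2) * sin ((th - tb)/2).
Proof.
  unfold aff, circ_pt; simpl.
  set (x := (th - ta)/2). set (y := (th - tb)/2).
  assert (H : cos th * cos ((ta+tb)/2) + sin th * sin ((ta+tb)/2) = cos (x + y)).
  { rewrite <- cos_minus. f_equal. unfold x, y. field. }
  replace ((ta - tb)/2) with (y - x) by (unfold x, y; field).
  transitivity (r * (cos th * cos ((ta+tb)/2) + sin th * sin ((ta+tb)/2)) - r * cos (y - x)).
  ring. rewrite H, cos_plus, cos_minus. ring.
Qed.

Lemma assemble (O : pt) r (Fq : R -> R) th1 th2 th3 th4 n1x n1y c1 n2x n2y c2 M :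
  0 < r -> circ_pt O r th1 <> circ_pt O r th2 -> circ_pt O r th3 <> circ_pt O r th4 ->
  (n1x <> 0 \/ n1y <> 0) -> (n2x <> 0 \/ n2y <> 0) ->
  aff n1x n1y c1 (circ_pt O r th1) = 0 -> aff n1x n1y c1 (circ_pt O r th2) = 0 ->
  aff n2x n2y c2 (circ_pt O r th3) = 0 -> aff n2x n2y c2 (circ_pt O r th4) = 0 ->
  M <> 0 ->
  (forall th, Fq th = M * aff n1x n1y c1 (circ_pt O r th) * aff n2x n2y c2 (circ_pt O r th)) ->
  exists K, K <> 0 /\ forall th, Fq th =
    K * sin ((th - th1)/2) * sin ((th - th2)/2) * sin ((th - th3)/2) * sin ((th - th4)/2).
Proof.
  intros Hr D12 D34 N1 N2 Z1 Z2 Z3 Z4 HM HF.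
  assert (Hu : forall s, cos s <> 0 \/ sin s <> 0).
  { intro s. pose proof (sc1 s). destruct (Req_dec (cos s) 0); [right; nra|left; auto]. }
  assert (Hz : forall ta tb, aff (cos ((ta+tb)/2)) (sin ((ta+tb)/2))
      (- (fst O * cos ((ta+tb)/2)) - snd O * sin ((ta+tb)/2) - r * cos ((ta-tb)/2))
      (circ_pt O r ta) = 0 /\
      aff (cos ((ta+tb)/2)) (sin ((ta+tb)/2))
      (- (fst O * cos ((ta+tb)/2)) - snd O * sin ((ta+tb)/2) - r * cos ((ta-tb)/2))
      (circ_pt O r tb) = 0).
  { intros ta tb. rewrite !chord. replace ((ta - ta)/2) with 0 by field.
    replace ((tb - tb)/2) with 0 by field. rewrite sin_0. split; ring. }
  destruct (Hz th1 th2) as [Za Zb]. destruct (Hz th3 th4) as [Zc Zd].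
  destruct (lprop _ _ _ _ _ _ _ _ D12 Za Zb Z1 Z2 (Hu _) N1) as [k1 [Hk1 E1]].
  destruct (lprop _ _ _ _ _ _ _ _ D34 Zc Zd Z3 Z4 (Hu _) N2) as [k2 [Hk2 E2]].
  exists (4 * r * r * M / (k1 * k2)). split.
  - unfold Rdiv. repeat apply Rmult_integral_contrapositive_currified; try lra; auto.
    apply Rinv_neq_0_compat. apply Rmult_integral_contrapositive_currified; auto.
  - intro th. rewrite HF.
    pose proof (E1 (circ_pt O r th)) as F1. pose proof (E2 (circ_pt O r th)) as F2.
    rewrite chord in F1, F2.
    assert (A1 : aff n1x n1y c1 (circ_pt O r th) = -2 * r * sin ((th - th1)/2) * sin ((th - th2)/2) / k1).
    { rewrite F1. field. auto. }
    assert (A2 : aff n2x n2y c2 (circ_pt O r th) = -2 * r * sin ((th - th3)/2) * sin ((th - th4)/2) / k2).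
    { rewrite F2. field. auto. }
    rewrite A1, A2. field. auto.
Qed.

Lemma eq_mod t x y k : x - y = k * (sin t * sin t + cos t * cos t - 1) -> x = y.
Proof. intro H. rewrite sc1 in H. lra. Qed.

Lemma cos3 t : cos (3 * t) = 4 * cos t ^ 3 - 3 * cos t.
Proof.
  replace (3 * t) with (2 * t + t) by ring.
  rewrite cos_plus, cos_2a_cos, sin_2a.
  apply (eq_mod t) with (k := - 2 * cos t). ring.
Qed.

Lemma sin3 t : sin (3 * t) = 3 * sin t - 4 * sin t ^ 3.
Proof.
  replace (3 * t) with (2 * t + t) by ring.
  rewrite sin_plus, cos_2a_cos, sin_2a.
  apply (eq_mod t) with (k := 4 * sin t). ring.
Qed.

Definition al a c := 3 * c ^ 2 / (2 * a).
Definition be b c := - (3 * c ^ 2 / (2 * b)).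
Definition Gx a c u := (c ^ 2 / 2 - a ^ 2) * cos u / a.
Definition Gy a b c u := - ((a ^ 2 - c ^ 2 / 2) * sin u / b).

Lemma vert a b c u t : a <> 0 -> b <> 0 ->
  cos (t + u) = cos (2 * t) -> sin (t + u) = - sin (2 * t) ->
  cos u = cos (3 * t) -> sin u = - sin (3 * t) ->
  Defs.Delta a b c u t = (al a c * cos t + Gx a c u, be b c * sin t + Gy a b c u).
Proof.
  intros Ha Hb H1 H2 H3 H4. unfold Defs.Delta, al, be, Gx, Gy.
  rewrite H1, H2, H3, H4, cos3, sin3, cos_2a_cos, sin_2a. f_equal.
  - field. auto.
  - apply (eq_mod t) with (k := - (2 * c ^ 2 * sin t / b)). field. auto.
Qed.

Definition Oc al be gx gy cu su : pt :=
  (gx + (al ^ 2 - be ^ 2) * cu / (4 * al), gy - (al ^ 2 - be ^ 2) * su / (4 * be)).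
Definition R2 al be cu su :=
  ((al ^ 2 - be ^ 2) * cu / (4 * al)) ^ 2 + ((al ^ 2 - be ^ 2) * su / (4 * be)) ^ 2
  + (al ^ 2 + be ^ 2) / 2.
Definition qf al be gx gy (P : pt) := ((fst P - gx) / al) ^ 2 + ((snd P - gy) / be) ^ 2.
Definition Lline al be gx gy p q k (P : pt) :=
  (fst P - gx) / al * p + (snd P - gy) / be * q + k.

Lemma core al be gx gy cu su s0 (P : pt) : al <> 0 -> be <> 0 ->
  cu = - cos (3 * s0) -> su = sin (3 * s0) ->
  (al ^ 2 * sin s0 ^ 2 + be ^ 2 * cos s0 ^ 2) * (qf al be gx gy P - 1)
  - ((fst P - fst (Oc al be gx gy cu su)) ^ 2 + (snd P - snd (Oc al be gx gy cu su)) ^ 2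
     - R2 al be cu su)
  = (be ^ 2 - al ^ 2) * Lline al be gx gy (cos s0) (sin s0) (-1/2) P
      * Lline al be gx gy (cos s0) (- sin s0) (cos (2 * s0)) P.
Proof.
  intros Ha Hb Hc Hs. rewrite cos3 in Hc. rewrite sin3 in Hs. subst cu su.
  destruct P as [x y]. unfold qf, Oc, R2, Lline; simpl. rewrite cos_2a.
  apply (eq_mod s0) with
    (k := al^2 * ((x-gx)/al)^2 + be^2*((y-gy)/be)^2 - (al^2-be^2)*cos s0*((x-gx)/al)
          + (al^2-be^2)*sin s0*((y-gy)/be) - (al^2+be^2)/2).
  field. auto.
Qed.

Lemma Z1 al be gx gy s0 t : al <> 0 -> be <> 0 -> cos (t - s0) = 1/2 ->
  Lline al be gx gy (cos s0) (sin s0) (-1/2) (al * cos t + gx, be * sin t + gy) = 0.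
Proof.
  intros Ha Hb H. rewrite cos_minus in H. unfold Lline; simpl.
  replace ((al * cos t + gx - gx) / al) with (cos t) by (field; auto).
  replace ((be * sin t + gy - gy) / be) with (sin t) by (field; auto). lra.
Qed.

Lemma Z2 al be gx gy s0 t : al <> 0 -> be <> 0 -> cos (t + s0) = - cos (2 * s0) ->
  Lline al be gx gy (cos s0) (- sin s0) (cos (2 * s0)) (al * cos t + gx, be * sin t + gy) = 0.
Proof.
  intros Ha Hb H. rewrite cos_plus in H. unfold Lline; simpl.
  replace ((al * cos t + gx - gx) / al) with (cos t) by (field; auto).
  replace ((be * sin t + gy - gy) / be) with (sin t) by (field; auto). lra.
Qed.

Lemma Lline_aff al be gx gy p q k P : al <> 0 -> be <> 0 ->
  Lline al be gx gy p q k P = aff (p / al) (q / be) (k - p * gx / al - q * gy / be) P.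
Proof. intros. unfold Lline, aff. field. auto. Qed.

Lemma Lnz al be p q : al <> 0 -> be <> 0 -> p * p + q * q = 1 -> p / al <> 0 \/ q / be <> 0.
Proof.
  intros Ha Hb H. destruct (Req_dec p 0) as [Hp|Hp].
  - right. subst. unfold Rdiv. apply Rmult_integral_contrapositive_currified.
    nra. apply Rinv_neq_0_compat; auto.
  - left. unfold Rdiv. apply Rmult_integral_contrapositive_currified; auto.
    apply Rinv_neq_0_compat; auto.
Qed.

Lemma distinct al be gx gy t1 t2 : al <> 0 -> be <> 0 -> cos (t1 - t2) <> 1 ->
  (al * cos t1 + gx, be * sin t1 + gy) <> (al * cos t2 + gx, be * sin t2 + gy).
Proof.
  intros Ha Hb H E. injection E as E1 E2. apply H. rewrite cos_minus.
  assert (cos t1 = cos t2).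
  { apply (Rmult_eq_reg_l al); auto. lra. }
  assert (sin t1 = sin t2).
  { apply (Rmult_eq_reg_l be); auto. lra. }
  rewrite H0, H1. rewrite Rplus_comm. apply sc1.
Qed.

Lemma vert_k a b c u t (k : nat) : a <> 0 -> b <> 0 -> t = - u / 3 - 2 * PI * INR k / 3 ->
  Defs.Delta a b c u t = (al a c * cos t + Gx a c u, be b c * sin t + Gy a b c u).
Proof.
  intros Ha Hb Ht. apply vert; auto.
  - rewrite <- (cos_period (t + u) k). replace (t + u + 2 * INR k * PI) with (- (2 * t)) by (rewrite Ht; field).
    apply cos_neg.
  - rewrite <- (sin_period (t + u) k). replace (t + u + 2 * INR k * PI) with (- (2 * t)) by (rewrite Ht; field).
    apply sin_neg.
  - rewrite <- (cos_period u k). replace (u + 2 * INR k * PI) with (- (3 * t)) by (rewrite Ht; field).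
    apply cos_neg.
  - rewrite <- (sin_period u k). replace (u + 2 * INR k * PI) with (- (3 * t)) by (rewrite Ht; field).
    apply sin_neg.
Qed.

Lemma cos_mmPI x : cos (- x - PI) = - cos x.
Proof. replace (- x - PI) with (- (x + PI)) by ring. rewrite cos_neg. apply neg_cos. Qed.
Lemma sin_mmPI x : sin (- x - PI) = sin x.
Proof. replace (- x - PI) with (- (x + PI)) by ring. rewrite sin_neg, neg_sin. ring. Qed.

Lemma polar_pt (O P : pt) r : 0 < r -> on_circle O r P -> exists th, circ_pt O r th = P.
Proof.
  intros Hr H. unfold on_circle in H.
  destruct (polar ((fst P - fst O) / r) ((snd P - snd O) / r)) as [th [H1 H2]].
  { replace (((fst P - fst O) / r) ^ 2 + ((snd P - snd O) / r) ^ 2)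
      with (((fst P - fst O) ^ 2 + (snd P - snd O) ^ 2) / r ^ 2) by (field; lra).
    rewrite H. field. lra. }
  exists th. unfold circ_pt. rewrite H1, H2. destruct P as [px py]; simpl. f_equal; field; lra.
Qed.

Lemma oncirc al be gx gy cu su s0 t : al <> 0 -> be <> 0 ->
  cu = - cos (3 * s0) -> su = sin (3 * s0) ->
  Lline al be gx gy (cos s0) (sin s0) (-1/2) (al * cos t + gx, be * sin t + gy)
   * Lline al be gx gy (cos s0) (- sin s0) (cos (2 * s0)) (al * cos t + gx, be * sin t + gy) = 0 ->
  0 <= R2 al be cu su ->
  on_circle (Oc al be gx gy cu su) (sqrt (R2 al be cu su)) (al * cos t + gx, be * sin t + gy).
Proof.
  intros Ha Hb Hc Hs HL HR.
  pose proof (core al be gx gy cu su s0 (al * cos t + gx, be * sin t + gy) Ha Hb Hc Hs) as E.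
  assert (Q : qf al be gx gy (al * cos t + gx, be * sin t + gy) = 1).
  { unfold qf; simpl. transitivity (sin t * sin t + cos t * cos t); [field; auto | apply sc1]. }
  rewrite Q in E. unfold on_circle.
  replace (sqrt (R2 al be cu su) ^ 2) with (R2 al be cu su) by (simpl; rewrite Rmult_1_r, sqrt_sqrt; auto).
  rewrite Rmult_assoc, HL in E. lra.
Qed.

Lemma cos2PI3 : cos (2 * (PI / 3)) = - 1 / 2.
Proof. rewrite cos_2a_cos, cos_PI3. field. Qed.
Lemma cos4PI3 : cos (2 * (2 * (PI / 3))) = - 1 / 2.
Proof. rewrite cos_2a_cos, cos2PI3. field. Qed.

Lemma sq_pos x : x <> 0 -> 0 < x ^ 2.
Proof. intro H. pose proof (Rsqr_pos_lt x H). unfold Rsqr in *. simpl. lra. Qed.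

Theorem proposition4p4 (a b c u : R) :
  a > b -> b > 0 -> c > 0 -> c ^ 2 = a ^ 2 - b ^ 2 ->
  is_steiner_point (cusp_vertex a b c u 1) (cusp_vertex a b c u 2)
                   (cusp_vertex a b c u 3)
    ((a ^ 2 - 2 * b ^ 2) / a * cos u, - ((2 * a ^ 2 - b ^ 2) / b) * sin u).
Proof.
  intros Hab Hb Hc Hc2.
  assert (Ha0 : a <> 0) by lra. assert (Hb0 : b <> 0) by lra.
  assert (Hal : al a c <> 0).
  { unfold al. unfold Rdiv. apply Rmult_integral_contrapositive_currified.
    - assert (0 < c ^ 2) by (apply pow_lt; lra). lra.
    - apply Rinv_neq_0_compat. lra. }
  assert (Hbe : be b c <> 0).
  { unfold be. unfold Rdiv. apply Ropp_neq_0_compat. apply Rmult_integral_contrapositive_currified.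
    - assert (0 < c ^ 2) by (apply pow_lt; lra). lra.
    - apply Rinv_neq_0_compat. lra. }
  set (A := al a c). set (B := be b c). set (gx := Gx a c u). set (gy := Gy a b c u).
  set (s := - u / 3 - PI / 3).
  set (T1 := s + PI / 3). set (T2 := s - PI / 3). set (T3 := s - PI).
  assert (EV1 : cusp_vertex a b c u 1 = (A * cos T1 + gx, B * sin T1 + gy)).
  { unfold cusp_vertex, tpar. replace (- u / 3 - 2 * PI * (INR 1 - 1) / 3) with T1
      by (unfold T1, s; simpl; field).
    apply (vert_k a b c u T1 0); auto. unfold T1, s; simpl; field. }
  assert (EV2 : cusp_vertex a b c u 2 = (A * cos T2 + gx, B * sin T2 + gy)).
  { unfold cusp_vertex, tpar. replace (- u / 3 - 2 * PI * (INR 2 - 1) / 3) with T2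
      by (unfold T2, s; simpl; field).
    apply (vert_k a b c u T2 1); auto. unfold T2, s; simpl; field. }
  assert (EV3 : cusp_vertex a b c u 3 = (A * cos T3 + gx, B * sin T3 + gy)).
  { unfold cusp_vertex, tpar. replace (- u / 3 - 2 * PI * (INR 3 - 1) / 3) with T3
      by (unfold T3, s; simpl; field).
    apply (vert_k a b c u T3 2); auto. unfold T3, s; simpl; field. }
  assert (EX : ((a ^ 2 - 2 * b ^ 2) / a * cos u, - ((2 * a ^ 2 - b ^ 2) / b) * sin u)
               = (A * cos u + gx, B * sin u + gy)).
  { unfold A, B, gx, gy, al, be, Gx, Gy. rewrite Hc2. f_equal; field; auto. }
  rewrite EV1, EV2, EV3, EX.
  set (V1 := (A * cos T1 + gx, B * sin T1 + gy)).
  set (V2 := (A * cos T2 + gx, B * sin T2 + gy)).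
  set (V3 := (A * cos T3 + gx, B * sin T3 + gy)).
  set (X := (A * cos u + gx, B * sin u + gy)).
  assert (Cu : cos u = - cos (3 * s)).
  { replace u with (- (3 * s) - PI) by (unfold s; field). apply cos_mmPI. }
  assert (Su : sin u = sin (3 * s)).
  { replace u with (- (3 * s) - PI) by (unfold s; field). apply sin_mmPI. }
  set (s' := s - 2 * PI / 3).
  assert (C3 : cos (3 * s') = cos (3 * s)).
  { rewrite <- (cos_period (3 * s') 1). f_equal. unfold s'; simpl; field. }
  assert (S3 : sin (3 * s') = sin (3 * s)).
  { rewrite <- (sin_period (3 * s') 1). f_equal. unfold s'; simpl; field. }
  assert (Cu' : cos u = - cos (3 * s')) by (rewrite C3; auto).
  assert (Su' : sin u = sin (3 * s')) by (rewrite S3; auto).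
  set (O := Oc A B gx gy (cos u) (sin u)).
  set (RR := R2 A B (cos u) (sin u)).
  assert (HRR : 0 < RR).
  { unfold RR, R2. assert (0 < A ^ 2) by (apply sq_pos; auto).
    assert (0 < B ^ 2) by (apply sq_pos; auto).
    pose proof (pow2_ge_0 ((A ^ 2 - B ^ 2) * cos u / (4 * A))).
    pose proof (pow2_ge_0 ((A ^ 2 - B ^ 2) * sin u / (4 * B))). lra. }
  set (r := sqrt RR).
  assert (Hr : 0 < r) by (apply sqrt_lt_R0; auto).
  assert (L1V1 : Lline A B gx gy (cos s) (sin s) (-1/2) V1 = 0).
  { apply Z1; auto. replace (T1 - s) with (PI / 3) by (unfold T1; ring). apply cos_PI3. }
  assert (L1V2 : Lline A B gx gy (cos s) (sin s) (-1/2) V2 = 0).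
  { apply Z1; auto. replace (T2 - s) with (- (PI / 3)) by (unfold T2; ring). rewrite cos_neg. apply cos_PI3. }
  assert (L2V3 : Lline A B gx gy (cos s) (- sin s) (cos (2 * s)) V3 = 0).
  { apply Z2; auto. replace (T3 + s) with (2 * s - PI) by (unfold T3; ring).
    rewrite cos_minus, cos_PI, sin_PI. ring. }
  assert (L2X : Lline A B gx gy (cos s) (- sin s) (cos (2 * s)) X = 0).
  { apply Z2; auto. replace (u + s) with (- (2 * s) - PI) by (unfold s; field). apply cos_mmPI. }
  assert (OV1 : on_circle O r V1).
  { apply (oncirc A B gx gy (cos u) (sin u) s T1); auto; [fold V1; rewrite L1V1; ring | unfold RR in HRR; lra]. }
  assert (OV2 : on_circle O r V2).
  { apply (oncirc A B gx gy (cos u) (sin u) s T2); auto; [fold V2; rewrite L1V2; ring | unfold RR in HRR; lra]. }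
  assert (OV3 : on_circle O r V3).
  { apply (oncirc A B gx gy (cos u) (sin u) s T3); auto; [fold V3; rewrite L2V3; ring | unfold RR in HRR; lra]. }
  assert (OX : on_circle O r X).
  { apply (oncirc A B gx gy (cos u) (sin u) s u); auto; [fold X; rewrite L2X; ring | unfold RR in HRR; lra]. }
  destruct (polar_pt O V1 r Hr OV1) as [th1 P1].
  destruct (polar_pt O V2 r Hr OV2) as [th2 P2].
  destruct (polar_pt O V3 r Hr OV3) as [th3 P3].
  destruct (polar_pt O X r Hr OX) as [th4 P4].
  assert (Gc : centroid V1 V2 V3 = (gx, gy)).
  { unfold centroid, V1, V2, V3, T1, T2, T3; simpl.
    rewrite cos_plus, !cos_minus, sin_plus, !sin_minus, cos_PI3, sin_PI3, cos_PI, sin_PI.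
    f_equal; field. }
  assert (QF : forall P, qform (centroid V1 V2 V3) (1 / A ^ 2) 0 (1 / B ^ 2) P = qf A B gx gy P).
  { intro P. rewrite Gc. unfold qform, qf; simpl. field. auto. }
  assert (QV : forall t, qf A B gx gy (A * cos t + gx, B * sin t + gy) = 1).
  { intro t. unfold qf; simpl. transitivity (sin t * sin t + cos t * cos t); [field; auto | apply sc1]. }
  assert (HD : forall s0, 0 < A ^ 2 * sin s0 ^ 2 + B ^ 2 * cos s0 ^ 2).
  { intro s0. pose proof (sc1 s0). assert (0 < A ^ 2) by (apply sq_pos; auto).
    assert (0 < B ^ 2) by (apply sq_pos; auto).
    assert (0 <= B ^ 2 * cos s0 ^ 2) by (apply Rmult_le_pos; [lra| apply pow2_ge_0]).
    assert (0 <= A ^ 2 * sin s0 ^ 2) by (apply Rmult_le_pos; [lra| apply pow2_ge_0]).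
    destruct (Req_dec (sin s0) 0) as [Z|Z].
    - rewrite Z in *. assert (Hc1 : cos s0 ^ 2 = 1) by (simpl; lra). rewrite Hc1. simpl. lra.
    - assert (0 < A ^ 2 * sin s0 ^ 2) by (apply Rmult_lt_0_compat; [lra| apply sq_pos; auto]). lra. }
  assert (HAB : B ^ 2 - A ^ 2 <> 0).
  { unfold A, B, al, be. intro E.
    assert (E' : (3 * c ^ 2) ^ 2 * (a ^ 2 - b ^ 2) = 0).
    { apply (Rmult_eq_reg_r (/ (4 * a ^ 2 * b ^ 2))).
      - rewrite Rmult_0_l. rewrite <- E. field. auto.
      - apply Rinv_neq_0_compat. apply Rmult_integral_contrapositive_currified;
          [apply Rmult_integral_contrapositive_currified|]; try lra; apply pow_nonzero; auto. }
    assert (0 < c ^ 2) by (apply pow_lt; lra).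
    assert (0 < a ^ 2 - b ^ 2) by (rewrite <- Hc2; auto).
    assert (0 < (3 * c ^ 2) ^ 2 * (a ^ 2 - b ^ 2)).
    { apply Rmult_lt_0_compat; auto. apply sq_pos. lra. }
    lra. }
  assert (FQ : forall s0, cos u = - cos (3 * s0) -> sin u = sin (3 * s0) -> forall th,
     qform (centroid V1 V2 V3) (1 / A ^ 2) 0 (1 / B ^ 2) (circ_pt O r th) - 1 =
     (B ^ 2 - A ^ 2) / (A ^ 2 * sin s0 ^ 2 + B ^ 2 * cos s0 ^ 2)
       * aff (cos s0 / A) (sin s0 / B) (-1/2 - cos s0 * gx / A - sin s0 * gy / B) (circ_pt O r th)
       * aff (cos s0 / A) (- sin s0 / B) (cos (2 * s0) - cos s0 * gx / A - - sin s0 * gy / B) (circ_pt O r th)).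
  { intros s0 Hc0 Hs0 th. rewrite QF. rewrite <- !Lline_aff by auto.
    pose proof (core A B gx gy (cos u) (sin u) s0 (circ_pt O r th) Hal Hbe Hc0 Hs0) as E.
    fold O RR in E.
    assert (Z : (fst (circ_pt O r th) - fst O) ^ 2 + (snd (circ_pt O r th) - snd O) ^ 2 - RR = 0).
    { unfold circ_pt; simpl. replace RR with (r * r) by (apply sqrt_sqrt; lra).
      transitivity (r * r * (sin th * sin th + cos th * cos th) - r * r); [ring| rewrite sc1; ring]. }
    rewrite Z, Rminus_0_r in E. pose proof (HD s0).
    apply (Rmult_eq_reg_l (A ^ 2 * sin s0 ^ 2 + B ^ 2 * cos s0 ^ 2)); [|lra].
    rewrite E. field. lra. }
  assert (NZ1 : forall s0, cos s0 / A <> 0 \/ sin s0 / B <> 0).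
  { intro s0. apply Lnz; auto. rewrite Rplus_comm; apply sc1. }
  assert (NZ2 : forall s0, cos s0 / A <> 0 \/ - sin s0 / B <> 0).
  { intro s0. apply Lnz; auto. rewrite <- (sc1 s0). ring. }
  assert (HM : forall s0, (B ^ 2 - A ^ 2) / (A ^ 2 * sin s0 ^ 2 + B ^ 2 * cos s0 ^ 2) <> 0).
  { intro s0. pose proof (HD s0). unfold Rdiv. apply Rmult_integral_contrapositive_currified; auto.
    apply Rinv_neq_0_compat. lra. }
  assert (D12 : V1 <> V2).
  { apply distinct; auto. replace (T1 - T2) with (2 * (PI / 3)) by (unfold T1, T2; field).
    rewrite cos2PI3. lra. }
  assert (D23 : V2 <> V3).
  { apply distinct; auto. replace (T2 - T3) with (2 * (PI / 3)) by (unfold T2, T3; field).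
    rewrite cos2PI3. lra. }
  assert (D13 : V1 <> V3).
  { apply distinct; auto. replace (T1 - T3) with (2 * (2 * (PI / 3))) by (unfold T1, T3; field).
    rewrite cos4PI3. lra. }
  assert (HK : exists K, K <> 0 /\ forall th,
     qform (centroid V1 V2 V3) (1 / A ^ 2) 0 (1 / B ^ 2) (circ_pt O r th) - 1 =
     K * sin ((th - th1) / 2) * sin ((th - th2) / 2) * sin ((th - th3) / 2) * sin ((th - th4) / 2)).
  { destruct (classic (V3 = X)) as [HX|HX].
    - assert (L1'V2 : Lline A B gx gy (cos s') (sin s') (-1/2) V2 = 0).
      { apply Z1; auto. replace (T2 - s') with (PI / 3) by (unfold T2, s'; field). apply cos_PI3. }
      assert (L1'V3 : Lline A B gx gy (cos s') (sin s') (-1/2) V3 = 0).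
      { apply Z1; auto. replace (T3 - s') with (- (PI / 3)) by (unfold T3, s'; field).
        rewrite cos_neg. apply cos_PI3. }
      assert (L2'V1 : Lline A B gx gy (cos s') (- sin s') (cos (2 * s')) V1 = 0).
      { apply Z2; auto. replace (T1 + s') with (2 * s' + PI) by (unfold T1, s'; field).
        apply neg_cos. }
      assert (L2'X : Lline A B gx gy (cos s') (- sin s') (cos (2 * s')) X = 0).
      { apply Z2; auto. rewrite <- (cos_period (u + s') 1).
        replace (u + s' + 2 * INR 1 * PI) with (- (2 * s') - PI) by (unfold s', s; simpl; field).
        apply cos_mmPI. }
      destruct (assemble O r (fun th => qform (centroid V1 V2 V3) (1 / A ^ 2) 0 (1 / B ^ 2) (circ_pt O r th) - 1)
        th2 th3 th1 th4 (cos s' / A) (sin s' / B) (-1/2 - cos s' * gx / A - sin s' * gy / B)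
        (cos s' / A) (- sin s' / B) (cos (2 * s') - cos s' * gx / A - - sin s' * gy / B)
        ((B ^ 2 - A ^ 2) / (A ^ 2 * sin s' ^ 2 + B ^ 2 * cos s' ^ 2)) Hr)
        as [K [HK1 HK2]]; [ | | exact (NZ1 s') | exact (NZ2 s') | | | | | exact (HM s') | | ].
      + rewrite P2, P3. auto.
      + rewrite P1, P4, <- HX. auto.
      + rewrite P2, <- Lline_aff by auto. exact L1'V2.
      + rewrite P3, <- Lline_aff by auto. exact L1'V3.
      + rewrite P1, <- Lline_aff by auto. exact L2'V1.
      + rewrite P4, <- Lline_aff by auto. exact L2'X.
      + intro th. apply (FQ s' Cu' Su').
      + exists K. split; auto. intro th. rewrite HK2. ring.
    - destruct (assemble O r (fun th => qform (centroid V1 V2 V3) (1 / A ^ 2) 0 (1 / B ^ 2) (circ_pt O r th) - 1)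
        th1 th2 th3 th4 (cos s / A) (sin s / B) (-1/2 - cos s * gx / A - sin s * gy / B)
        (cos s / A) (- sin s / B) (cos (2 * s) - cos s * gx / A - - sin s * gy / B)
        ((B ^ 2 - A ^ 2) / (A ^ 2 * sin s ^ 2 + B ^ 2 * cos s ^ 2)) Hr)
        as [K [HK1 HK2]]; [ | | exact (NZ1 s) | exact (NZ2 s) | | | | | exact (HM s) | | ].
      + rewrite P1, P2. auto.
      + rewrite P3, P4. auto.
      + rewrite P1, <- Lline_aff by auto. exact L1V1.
      + rewrite P2, <- Lline_aff by auto. exact L1V2.
      + rewrite P3, <- Lline_aff by auto. exact L2V3.
      + rewrite P4, <- Lline_aff by auto. exact L2X.
      + intro th. apply (FQ s Cu Su).
      + exists K. split; auto. }
  destruct HK as [K [HK1 HK2]].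
  assert (Q1 : 0 < 1 / A ^ 2).
  { unfold Rdiv. rewrite Rmult_1_l. apply Rinv_0_lt_compat. apply sq_pos; auto. }
  assert (Q2 : 0 < 1 / B ^ 2).
  { unfold Rdiv. rewrite Rmult_1_l. apply Rinv_0_lt_compat. apply sq_pos; auto. }
  exists O, r, (1 / A ^ 2), 0, (1 / B ^ 2), th1, th2, th3, th4, K.
  split; [|split; [|split; [|split; [|split; [|split; [|split]]]]]]; auto.
  - unfold is_circumcircle. auto.
  - unfold is_steiner_circumellipse. rewrite !QF. unfold V1, V2, V3. rewrite !QV.
    split; auto. split; [|auto]. replace (0 ^ 2) with 0 by ring.
    rewrite Rminus_0_r. apply Rmult_lt_0_compat; auto.
Qed.
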